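(* Assume the MDP satisfies the low-rank assumption with parameter $d$. For an arbitrary pair of policies $\pi^\theta=\{\pi^\theta_t\}_{t\in[H]}$ and $\pi^\beta=\{\pi^\beta_t\}_{t\in[H]}$, \[ \widehat{\operatorname{Dis}}\big(d_t^{\pi^\theta},d_t^{\pi^\beta}\big)\le\sum_{i=1}^t\big(\sqrt{dS^2A}\big)^{t-i}\,\|\pi^\theta_i-\pi^\beta_i\|_{\mathrm{op}}\qquad\text{for all }t\in[H]. \]
   Context: MDP: finite state space $\mathcal S$ ($S=|\mathcal S|$), finite action space $\mathcal A$ ($A=|\mathcal A|$), horizon $H$, transitions $P_t(\cdot\mid s,a)$, initial distribution $\mu_1$. Policies $\pi=\{\pi_t:\mathcal S\to\Delta(\mathcal A)\}$, with $s_1\sim\mu_1$, $a_t\sim\pi_t(\cdot\mid s_t)$, $s_{t+1}\sim P_t(\cdot\mid s_t,a_t)$; $d_t^\pi(s,a)=\Pr_\pi(s_t=s,a_t=a)$, viewed as an $S\times A$ matrix; $\pi_t$ is viewed as the $S\times A$ matrix with entries $\pi_t(a\mid s)$. $\|\cdot\|_{\mathrm{op}}$ is the spectral norm and $\widehat{\operatorname{Dis}}(p,q)=\|p-q\|_{\mathrm{op}}$. Low-rank assumption with parameter $d$: with $d'=\lfloor d/2\rfloor$, for each $t$ either $P_t(s'\mid s,a)=\sum_{i=1}^{d'}u_{t,i}(s',s)w_{t,i}(a)$ for all $s',s,a$, or $P_t(s'\mid s,a)=\sum_{i=1}^{d'}u_{t,i}(s)w_{t,i}(s',a)$ for all $s',s,a$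 (and each reward $r_t$ has rank at most $d'$). *)

(* Defs.v *)
From HB Require Import structures.
From mathcomp Require Import all_boot all_order all_algebra.
From mathcomp Require Import classical_sets reals.
Set Implicit Arguments. Unset Strict Implicit. Unset Printing Implicit Defensive.
Import Order.TTheory GRing.Theory Num.Theory.
Local Open Scope ring_scope.
Local Open Scope classical_set_scope.

Definition vnorm2 (R : realType) (n : nat) (x : 'cV[R]_n) : R :=
  Num.sqrt (\sum_(i < n) x i 0 ^+ 2).

Definition opnorm (R : realType) (m n : nat) (M : 'M[R]_(m, n)) : R :=
  sup [set vnorm2 (M *m x) | x in [set x : 'cV[R]_n | vnorm2 x <= 1]].

Definition is_distr (R : realType) (n : nat) (p : 'I_n -> R) : Prop :=
  (forall i, 0 <= p i) /\ \sum_(i < n) p i = 1.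

(* A policy at one step: an S x A row-stochastic matrix, entry (s,a) = pi(a|s). *)
Definition is_policy_mx (R : realType) (S A : nat) (p : 'M[R]_(S, A)) : Prop :=
  forall s, is_distr (fun a => p s a).

(* Transitions: P t s a s' = P_t(s' | s, a); policies pi t, t = 1..H;
   initial distribution mu.  [sdist P mu pi k] is the state marginal at
   time k+1:  sdist 0 = mu,
   sdist (k+1) s' = sum_{s,a} sdist k s * pi_(k+1)(a|s) * P_(k+1)(s'|s,a). *)
Fixpoint sdist (R : realType) (S A : nat)
  (P : nat -> 'I_S -> 'I_A -> 'I_S -> R) (mu : 'I_S -> R)
  (pi : nat -> 'M[R]_(S, A)) (k : nat) : 'I_S -> R :=
  match k with
  | 0 => mu
  | k'.+1 => fun s' => \sum_(s < S) \sum_(a < A)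
              sdist P mu pi k' s * pi k'.+1 s a * P k'.+1 s a s'
  end.

(* Occupancy measure d_t^pi(s,a) = Pr_pi(s_t = s, a_t = a), t >= 1,
   as an S x A matrix. *)
Definition occ (R : realType) (S A : nat)
  (P : nat -> 'I_S -> 'I_A -> 'I_S -> R) (mu : 'I_S -> R)
  (pi : nat -> 'M[R]_(S, A)) (t : nat) : 'M[R]_(S, A) :=
  \matrix_(s, a) (sdist P mu pi t.-1 s * pi t s a).

Definition lowrank_step (R : realType) (S A : nat) (d : nat)
  (Pt : 'I_S -> 'I_A -> 'I_S -> R) : Prop :=
  (exists (u : 'I_(d./2) -> 'I_S -> 'I_S -> R) (w : 'I_(d./2) -> 'I_A -> R),
      forall s' s a, Pt s a s' = \sum_(i < d./2) u i s' s * w i a)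
  \/
  (exists (u : 'I_(d./2) -> 'I_S -> R) (w : 'I_(d./2) -> 'I_S -> 'I_A -> R),
      forall s' s a, Pt s a s' = \sum_(i < d./2) u i s * w i s' a).

(* Main.v *)
Require Import Defs.
From HB Require Import structures.
From mathcomp Require Import all_boot all_order all_algebra.
From mathcomp Require Import classical_sets reals.
From mathcomp Require Import ring lra.
Import Order.TTheory GRing.Theory Num.Theory.
Set Implicit Arguments. Unset Strict Implicit. Unset Printing Implicit Defensive.
Local Open Scope ring_scope.

Lemma CS (R : realType) (I : finType) (f g : I -> R) :
  (\sum_i f i * g i) ^+ 2 <= (\sum_i f i ^+ 2) * (\sum_i g i ^+ 2).
Proof.
set a := \sum_i f i ^+ 2; set b := \sum_i f i * g i; set c := \sum_i g i ^+ 2.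
have a0 : 0 <= a by apply: sumr_ge0 => i _; exact: sqr_ge0.
have [ae|an0] := eqVneq a 0.
  have f0 : forall i, f i = 0.
    move=> i; apply/eqP; rewrite -sqrf_eq0; apply/eqP.
    exact: (@psumr_eq0P _ _ xpredT (fun i => f i ^+ 2) (fun i _ => sqr_ge0 (f i)) ae i isT).
  by rewrite ae /b big1 ?expr0n ?mul0r // => i _; rewrite f0 mul0r.
have ap : 0 < a by rewrite lt0r an0 a0.
have H : 0 <= \sum_i (b * f i - a * g i) ^+ 2 by apply: sumr_ge0 => i _; exact: sqr_ge0.
have E : \sum_i (b * f i - a * g i) ^+ 2 = a * (a * c - b ^+ 2).
  rewrite (eq_bigr (fun i => b ^+ 2 * f i ^+ 2 - (2 * a * b) * (f i * g i) + a ^+ 2 * g i ^+ 2)); last first.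
    by move=> i _; ring.
  rewrite big_split /= sumrB -!mulr_sumr /a /b /c; ring.
rewrite E in H.
rewrite -subr_ge0; move: H; rewrite pmulr_rge0 //.
Qed.

Lemma CS' (R : realType) (I : finType) (f g : I -> R) :
  \sum_i f i * g i <= Num.sqrt (\sum_i f i ^+ 2) * Num.sqrt (\sum_i g i ^+ 2).
Proof.
rewrite -sqrtrM; last by apply: sumr_ge0 => i _; exact: sqr_ge0.
apply: (le_trans (ler_norm _)); rewrite -sqrtr_sqr; apply: ler_wsqrtr; exact: CS.
Qed.

Definition ss (R : realType) n (x : 'cV[R]_n) := \sum_i x i 0 ^+ 2.

Lemma ss_ge0 (R : realType) n (x : 'cV[R]_n) : 0 <= ss x.
Proof. by apply: sumr_ge0 => i _; exact: sqr_ge0. Qed.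

Lemma vnorm2_ge0 (R : realType) n (x : 'cV[R]_n) : 0 <= vnorm2 x.
Proof. exact: sqrtr_ge0. Qed.

Lemma sq_vnorm2 (R : realType) n (x : 'cV[R]_n) : vnorm2 x ^+ 2 = ss x.
Proof. by rewrite /vnorm2 sqr_sqrtr // ss_ge0. Qed.

Lemma vnorm2D (R : realType) n (x y : 'cV[R]_n) :
  vnorm2 (x + y) <= vnorm2 x + vnorm2 y.
Proof.
have h : 0 <= vnorm2 x + vnorm2 y by rewrite addr_ge0 // vnorm2_ge0.
rewrite -(ger0_norm h) -sqrtr_sqr /vnorm2; apply: ler_wsqrtr.
have -> : \sum_i (x + y) i 0 ^+ 2 =
   \sum_i x i 0 ^+ 2 + 2 * \sum_i x i 0 * y i 0 + \sum_i y i 0 ^+ 2.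
  rewrite mulr_sumr -!big_split /=; apply: eq_bigr => i _; rewrite mxE; ring.
have := CS' (fun i => x i 0) (fun i => y i 0).
rewrite sqrrD !sqr_sqrtr; [|exact: ss_ge0|exact: ss_ge0].
rewrite -/(ss x) -/(ss y) => h2.
rewrite /ss; rewrite -/(Num.sqrt (ss x)) -/(Num.sqrt (ss y)); lra.
Qed.

Lemma vnorm2Z (R : realType) n (c : R) (x : 'cV[R]_n) :
  vnorm2 (c *: x) = `|c| * vnorm2 x.
Proof.
rewrite /vnorm2 -sqrtr_sqr -sqrtrM ?sqr_ge0 //; congr Num.sqrt.
rewrite mulr_sumr; apply: eq_bigr => i _; rewrite mxE; ring.
Qed.

Lemma vnorm2_0 (R : realType) n : vnorm2 (0 : 'cV[R]_n) = 0.
Proof. by rewrite /vnorm2 big1 ?sqrtr0 // => i _; rewrite mxE expr0n. Qed.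

Lemma coord_le (R : realType) n (x : 'cV[R]_n) i : `|x i 0| <= vnorm2 x.
Proof.
rewrite -sqrtr_sqr /vnorm2; apply: ler_wsqrtr.
rewrite (bigD1 i) //= lerDl; apply: sumr_ge0 => j _; exact: sqr_ge0.
Qed.

Lemma mulmx_frob (R : realType) m n (M : 'M[R]_(m, n)) (x : 'cV[R]_n) :
  vnorm2 (M *m x) <= Num.sqrt (\sum_i \sum_j M i j ^+ 2) * vnorm2 x.
Proof.
rewrite /vnorm2 -sqrtrM; last by apply: sumr_ge0 => i _; apply: sumr_ge0 => j _; exact: sqr_ge0.
apply: ler_wsqrtr; rewrite mulr_suml; apply: ler_sum => i _.
rewrite mxE; exact: CS.
Qed.

Lemma ss_eq0 (R : realType) n (x : 'cV[R]_n) : vnorm2 x = 0 -> x = 0.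
Proof.
move=> h; have : ss x = 0 by rewrite -sq_vnorm2 h expr0n.
move=> h2; apply/matrixP => i j; rewrite (ord1 j) mxE; apply/eqP; rewrite -sqrf_eq0; apply/eqP.
exact: (@psumr_eq0P _ _ xpredT (fun i => x i 0 ^+ 2) (fun i _ => sqr_ge0 _) h2 i isT).
Qed.

Definition opset (R : realType) m n (M : 'M[R]_(m, n)) :=
  [set vnorm2 (M *m x) | x in [set x : 'cV[R]_n | vnorm2 x <= 1]]%classic.

Lemma opset_has_sup (R : realType) m n (M : 'M[R]_(m, n)) : has_sup (opset M).
Proof.
split.
  exists (vnorm2 (M *m 0)), 0 => //=; by rewrite vnorm2_0 ler01.
exists (Num.sqrt (\sum_i \sum_j M i j ^+ 2)) => _ [x /= hx <-].
apply: (le_trans (mulmx_frob M x)); rewrite ler_piMr // sqrtr_ge0 //.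
Qed.

Lemma opnorm_ub (R : realType) m n (M : 'M[R]_(m, n)) x :
  vnorm2 x <= 1 -> vnorm2 (M *m x) <= opnorm M.
Proof. move=> hx; apply: (sup_upper_bound (opset_has_sup M)); by exists x. Qed.

Lemma opnorm_ge0 (R : realType) m n (M : 'M[R]_(m, n)) : 0 <= opnorm M.
Proof.
have := @opnorm_ub R m n M 0; rewrite vnorm2_0 mulmx0 vnorm2_0; apply; exact: ler01.
Qed.

Lemma opnorm_bound (R : realType) m n (M : 'M[R]_(m, n)) x :
  vnorm2 (M *m x) <= opnorm M * vnorm2 x.
Proof.
have [h0|hn0] := eqVneq (vnorm2 x) 0.
  by rewrite (ss_eq0 h0) mulmx0 !vnorm2_0 mulr0.
have hp : 0 < vnorm2 x by rewrite lt0r hn0 vnorm2_ge0.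
have := @opnorm_ub R m n M ((vnorm2 x)^-1 *: x).
rewrite vnorm2Z -scalemxAr vnorm2Z ger0_norm ?invr_ge0 ?vnorm2_ge0 // mulVf //.
move=> /(_ (lexx _)); rewrite -(ler_pM2r hp) mulrAC mulVf // mul1r.
by [].
Qed.

Lemma opnorm_least (R : realType) m n (M : 'M[R]_(m, n)) K :
  (forall x, vnorm2 x <= 1 -> vnorm2 (M *m x) <= K) -> opnorm M <= K.
Proof.
move=> h; apply: ge_sup; first by case: (opset_has_sup M).
by move=> _ [x /= hx <-]; apply: h.
Qed.

Lemma distr_le1 (R : realType) n (p : 'I_n -> R) : is_distr p -> forall i, p i <= 1.
Proof.
move=> [h0 h1] i; rewrite -h1 (bigD1 i) //= lerDl; exact: sumr_ge0.
Qed.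

Lemma distr_sq (R : realType) n (p : 'I_n -> R) : is_distr p -> \sum_i p i ^+ 2 <= 1.
Proof.
move=> hp; have [h0 h1] := hp; rewrite -h1; apply: ler_sum => i _.
have := distr_le1 hp i; have := h0 i; nra.
Qed.

Lemma row_bound (R : realType) m n (D : 'M[R]_(m, n)) s :
  \sum_a D s a ^+ 2 <= opnorm D ^+ 2.
Proof.
set z : 'cV[R]_n := \col_a D s a.
have e : \sum_a D s a ^+ 2 = ss z by apply: eq_bigr => a _; rewrite mxE.
have e2 : ss z = (D *m z) s 0 by rewrite mxE; apply: eq_bigr => a _; rewrite mxE expr2.
have h : vnorm2 z ^+ 2 <= opnorm D * vnorm2 z.
  rewrite sq_vnorm2 e2; apply: (le_trans (ler_norm _)).
  apply: (le_trans (coord_le _ _)); exact: opnorm_bound.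
have hz : vnorm2 z <= opnorm D.
  have [h0|hn0] := eqVneq (vnorm2 z) 0; first by rewrite h0 opnorm_ge0.
  have hp : 0 < vnorm2 z by rewrite lt0r hn0 vnorm2_ge0.
  by move: h; rewrite expr2 ler_pM2r.
rewrite e -sq_vnorm2; have := vnorm2_ge0 z; nra.
Qed.

Lemma frob_bound (R : realType) m n (D : 'M[R]_(m, n)) :
  \sum_s \sum_a D s a ^+ 2 <= m%:R * opnorm D ^+ 2.
Proof.
apply: (le_trans (ler_sum _ (fun s _ => row_bound D s))).
by rewrite sumr_const card_ord mulr_natl.
Qed.

Lemma delta_bound (R : realType) S A (D : 'M[R]_(S, A))
  (Q : 'I_S -> 'I_A -> 'I_S -> R) :
  (forall s a, is_distr (Q s a)) ->
  \sum_s' (\sum_s \sum_a D s a * Q s a s') ^+ 2 <= (S ^ 2 * A)%:R * opnorm D ^+ 2.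
Proof.
move=> hQ.
have step : forall s', (\sum_s \sum_a D s a * Q s a s') ^+ 2 <=
   (\sum_s \sum_a D s a ^+ 2) * (\sum_s \sum_a Q s a s' ^+ 2).
  move=> s'; rewrite !pair_bigA /=.
  exact: (CS (fun p : 'I_S * 'I_A => D p.1 p.2) (fun p => Q p.1 p.2 s')).
apply: (le_trans (ler_sum _ (fun s' _ => step s'))); rewrite -mulr_sumr.
have hQs : \sum_s' \sum_s \sum_a Q s a s' ^+ 2 <= (S * A)%:R.
  rewrite exchange_big /=; apply: (@le_trans _ _ (\sum_(s < S) (A%:R : R))).
    apply: ler_sum => s _; rewrite exchange_big /=.
    apply: (@le_trans _ _ (\sum_(a < A) (1 : R))); last by rewrite sumr_const card_ord.
    apply: ler_sum => a _; exact: distr_sq.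
  by rewrite sumr_const card_ord natrM mulr_natl.
have h1 := frob_bound D.
have h2 : 0 <= \sum_s \sum_a D s a ^+ 2.
  by apply: sumr_ge0 => s _; apply: sumr_ge0 => a _; exact: sqr_ge0.
have h3 : 0 <= \sum_s' \sum_s \sum_a Q s a s' ^+ 2.
  by apply: sumr_ge0 => s' _; apply: sumr_ge0 => s _; apply: sumr_ge0 => a _; exact: sqr_ge0.
apply: (le_trans (ler_pM h2 h3 h1 hQs)).
by rewrite !(natrM, natrX) le_eqVlt; apply/orP; left; apply/eqP; ring.
Qed.

Lemma one_step (R : realType) S A (rho del : 'I_S -> R) (Pi piB : 'M[R]_(S, A)) :
  (forall s, `|rho s| <= 1) -> is_policy_mx piB ->
  opnorm (\matrix_(s, a) (rho s * Pi s a + del s * piB s a)) <=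
  opnorm Pi + Num.sqrt (\sum_s del s ^+ 2).
Proof.
move=> hrho hpi; apply: opnorm_least => x hx.
set u : 'cV[R]_S := \col_s (rho s * (Pi *m x) s 0).
set v : 'cV[R]_S := \col_s (del s * (piB *m x) s 0).
have -> : \matrix_(s, a) (rho s * Pi s a + del s * piB s a) *m x = u + v.
  apply/matrixP => i j; rewrite (ord1 j) !mxE.
  rewrite mulr_sumr mulr_sumr -big_split /=; apply: eq_bigr => a _.
  rewrite mxE; ring.
apply: (le_trans (vnorm2D u v)); apply: lerD.
  apply: (@le_trans _ _ (vnorm2 (Pi *m x))).
    apply: ler_wsqrtr; apply: ler_sum => s _; rewrite mxE exprMn.
    have h1 := hrho s; have h2 : rho s ^+ 2 <= 1.
      by move: h1; rewrite ler_norml => /andP[]; nra.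
    have := sqr_ge0 ((Pi *m x) s 0); nra.
  apply: (le_trans (opnorm_bound Pi x)).
  have := opnorm_ge0 Pi; have := vnorm2_ge0 x; nra.
apply: ler_wsqrtr; apply: ler_sum => s _; rewrite mxE exprMn.
have hx2 : ss x <= 1 by rewrite -sq_vnorm2; have := vnorm2_ge0 x; nra.
have hs : (piB *m x) s 0 ^+ 2 <= 1.
  rewrite mxE; apply: (le_trans (CS (fun a => piB s a) (fun a => x a 0))).
  rewrite -[1]mulr1; apply: ler_pM => //.
  - by apply: sumr_ge0 => a _; exact: sqr_ge0.
  - exact: ss_ge0.
  - exact: distr_sq (hpi s).
have := sqr_ge0 (del s); nra.
Qed.

Lemma sdist_distr (R : realType) S A H (P : nat -> 'I_S -> 'I_A -> 'I_S -> R) mu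
  (pi : nat -> 'M[R]_(S, A)) :
  is_distr mu ->
  (forall t, (1 <= t <= H)%N -> forall s a, is_distr (P t s a)) ->
  (forall t, (1 <= t <= H)%N -> is_policy_mx (pi t)) ->
  forall k, (k < H)%N -> is_distr (sdist P mu pi k).
Proof.
move=> hmu hP hpi; elim=> [//|k IH] hk.
have hk1 : (1 <= k.+1 <= H)%N by rewrite /= (ltnW hk).
have [h0 h1] := IH (ltnW hk).
split.
  move=> s' /=; apply: sumr_ge0 => s _; apply: sumr_ge0 => a _.
  by rewrite !mulr_ge0 //; [case: (hpi _ hk1 s) | case: (hP _ hk1 s a)].
rewrite /= exchange_big /= -h1; apply: eq_bigr => s _.
rewrite exchange_big /=.
have [_ e0] := hpi _ hk1 s.
transitivity (sdist P mu pi k s * \sum_a pi k.+1 s a); last by rewrite e0 mulr1.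
rewrite mulr_sumr; apply: eq_bigr => a _.
have [_ e] := hP _ hk1 s a.
by rewrite -mulr_sumr e mulr1.
Qed.

Theorem lemma1 (R : realType) (S A H d : nat)
  (P : nat -> 'I_S -> 'I_A -> 'I_S -> R) (mu : 'I_S -> R)
  (piT piB : nat -> 'M[R]_(S, A)) :
  is_distr mu ->
  (forall t, (1 <= t <= H)%N -> forall s a, is_distr (P t s a)) ->
  (forall t, (1 <= t <= H)%N -> lowrank_step d (P t)) ->
  (forall t, (1 <= t <= H)%N -> is_policy_mx (piT t)) ->
  (forall t, (1 <= t <= H)%N -> is_policy_mx (piB t)) ->
  forall t, (1 <= t <= H)%N ->
    opnorm (occ P mu piT t - occ P mu piB t) <=
    \sum_(1 <= i < t.+1)
      (Num.sqrt ((d * S ^ 2 * A)%:R)) ^+ (t - i) * opnorm (piT i - piB i).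
Proof.
move=> hmu hP hL hT hB t ht.
have H1 : (1 <= 1 <= H)%N by rewrite /=; case/andP: ht => h1 h2; exact: leq_trans h1 h2.
have hc : Num.sqrt ((S ^ 2 * A)%:R) <= Num.sqrt ((d * S ^ 2 * A)%:R) :> R.
  case: d hL => [|d'] hL.
    case: (posnP S) => [S0|Sp]; first by rewrite S0 exp0n // mul0n sqrtr0 ?sqrtr_ge0.
    case: (posnP A) => [A0|Ap]; first by rewrite A0 muln0 sqrtr0 ?sqrtr_ge0.
    exfalso.
    have [_ h1] := hP 1%N H1 (Ordinal Sp) (Ordinal Ap).
    have z : forall s', P 1%N (Ordinal Sp) (Ordinal Ap) s' = 0.
      move=> s'; case: (hL 1%N H1) => [[u [w e]]|[u [w e]]]; by rewrite e big_ord0.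
    move: h1; rewrite big1 ?z // => /eqP; by rewrite eq_sym oner_eq0.
  apply: ler_wsqrtr; rewrite ler_nat -mulnA; exact: leq_pmull.
set c' := Num.sqrt ((d * S ^ 2 * A)%:R) : R.
set c := Num.sqrt ((S ^ 2 * A)%:R) : R.
have c0 : 0 <= c by exact: sqrtr_ge0.
set e := fun t => opnorm (occ P mu piT t - occ P mu piB t).
set p := fun i => opnorm (piT i - piB i).
have key : forall t, (1 <= t <= H)%N -> e t <= p t +
    Num.sqrt (\sum_s (sdist P mu piT t.-1 s - sdist P mu piB t.-1 s) ^+ 2).
  move=> k hk; rewrite /e /p.
  have -> : occ P mu piT k - occ P mu piB k =
     \matrix_(s, a) (sdist P mu piT k.-1 s * (piT k - piB k) s a +
                     (sdist P mu piT k.-1 s - sdist P mu piB k.-1 s) * piB k s a).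
    by apply/matrixP => i j; rewrite !mxE; ring.
  apply: one_step; last exact: hB.
  move=> s; have hd : (k.-1 < H)%N.
    by case/andP: hk; case: k => // k _ /=.
  have [h0 _] := sdist_distr hmu hP hT hd.
  by rewrite ger0_norm // (distr_le1 (sdist_distr hmu hP hT hd)).
have rec : forall k, (k.+2 <= H)%N -> e k.+2 <= p k.+2 + c' * e k.+1.
  move=> k hk; have hk2 : (1 <= k.+2 <= H)%N by rewrite hk.
  have hk1 : (1 <= k.+1 <= H)%N by rewrite (ltnW hk).
  apply: (le_trans (key _ hk2)); rewrite lerD2l /=.
  have -> : \sum_s (sdist P mu piT k.+1 s - sdist P mu piB k.+1 s) ^+ 2 =
     \sum_s (\sum_s0 \sum_a (occ P mu piT k.+1 - occ P mu piB k.+1) s0 a * P k.+1 s0 a s) ^+ 2.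
    apply: eq_bigr => s _; congr (_ ^+ 2) => /=.
    rewrite -sumrB; apply: eq_bigr => s0 _; rewrite -sumrB; apply: eq_bigr => a _.
    rewrite !mxE /=; ring.
  apply: (@le_trans _ _ (Num.sqrt ((S ^ 2 * A)%:R * e k.+1 ^+ 2))).
    apply: ler_wsqrtr; exact: delta_bound (hP _ hk1).
  rewrite sqrtrM ?ler0n // sqrtr_sqr ger0_norm; last exact: opnorm_ge0.
  apply: ler_wpM2r => //; exact: opnorm_ge0.
move: t ht; elim=> [//|k IH] hk.
case: k IH hk => [|k] IH hk.
  rewrite big_nat1 subnn expr0 mul1r.
  apply: (le_trans (key _ hk)) => /=.
  by rewrite big1 ?sqrtr0 ?addr0 // => s _; rewrite subrr expr0n.
have hk' : (1 <= k.+1 <= H)%N by rewrite /= ltnW //; case/andP: hk.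
apply: (le_trans (rec _ (proj2 (andP hk)))).
rewrite big_nat_recr //= subnn expr0 mul1r addrC /p lerD2l.
apply: (le_trans (ler_wpM2l (sqrtr_ge0 _) (IH hk'))).
rewrite mulr_sumr le_eqVlt; apply/orP; left; apply/eqP.
apply: eq_big_nat => i /andP[i1 i2].
rewrite mulrA; change (Num.sqrt ((d * S ^ 2 * A)%:R)) with c'; by rewrite -exprS -(subSn i2).
Qed.
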